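(* Let $(\Omega,\mathcal F)$ be a measurable space with $\Sigma\neq\emptyset$, and let $v:\mathcal F\to\mathbb R$ be a non-decreasing continuous set function with $v(\emptyset)=0$. Let $f_n:\Omega\to\mathbb R$ ($n\in\mathbb N$) and $f:\Omega\to\mathbb R$ be measurable and Choquet integrable with respect to $v$, such that $f_n$ is pointwise non-decreasing in $n$ and $f=\lim_n f_n$ $v$-almost surely. Then $\lim_{n\to\infty}v(f_n)=v(f)$.
   Context: $\Sigma$ denotes the set of all classes $\mathcal I\subset\mathcal F$ that are chains (totally ordered by inclusion), contain $\emptyset$ and $\Omega$, and generate $\mathcal F$ as a $\sigma$-algebra. $v$ is non-decreasing if $v(A)\le v(B)$ for $A\subset B$. For $\mathcal I\in\Sigma$ let $\mathcal J$ be the algebra generated by $\mathcal I$, whose elements are the sets $\bigcup_{i=1}^n (C_i\cap D_i^c)$ with $C_1\supset D_1\supset\cdots\supset C_n\supset D_n$ in $\mathcal I$; define $\mu_{v,\mathcal I}(\bigcup_{i=1}^n (C_i\cap D_i^c))=\sum_{i=1}^n(v(C_i)-v(D_i))$. $v$ is continuous if for every $\mathcal I\in\Sigma$ this $\mu_{v,\mathcal I}$ is $\sigma$-additive on $\mathcal J$. The Choquet integral of a measurable $f$ is $v(f)=\lim_{y\to-\infty}\big(y\,v(\Omega)+\int_y^\infty v(\{\omega: f(\omega)>z\})\,dz\big)$ (Lebesgue integral), and $f$ is Choquet integrable if this is a well-defined real number. A set $N\in\mathcal F$ is $v$-null if $v(N\cup A)=v(N^c\cap A)=v(A)$ for all $A\in\mathcal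 F$; $f=\lim f_n$ $v$-almost surely means there is a $v$-null $N$ with $\lim f_n(\omega)=f(\omega)$ for all $\omega\in N^c$. *)

(* Defs.v *)
From mathcomp Require Import all_boot all_order all_algebra.
From mathcomp Require Import all_classical all_reals all_analysis.
Set Implicit Arguments. Unset Strict Implicit. Unset Printing Implicit Defensive.
Import Order.TTheory GRing.Theory Num.Theory.
Import numFieldNormedType.Exports.
Local Open Scope classical_set_scope.
Local Open Scope ring_scope.

Section Choquet.
Context (d : measure_display) (T : measurableType d) (R : realType).
Implicit Types (v : set T -> R) (I : set (set T)).

Definition nondecreasing_sf v : Prop :=
  forall A B : set T, measurable A -> measurable B -> A `<=` B -> v A <= v B.

Definition in_Sigma I : Prop :=
  [/\ I `<=` measurable,
      (forall A B, I A -> I B -> A `<=` B \/ B `<=` A),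
      I set0, I setT & <<s I>> = @measurable d T].

Definition chain_rep v I (A : set T) (x : R) : Prop :=
  exists (n : nat) (C D : nat -> set T),
    [/\ (forall i, (i < n)%N -> I (C i) /\ I (D i)),
        (forall i, (i < n)%N -> D i `<=` C i),
        (forall i, (i.+1 < n)%N -> C i.+1 `<=` D i),
        A = \bigcup_(i in [set k | (k < n)%N]) (C i `\` D i) &
        x = \sum_(i < n) (v (C i) - v (D i))].

(* membership in the algebra J generated by I *)
Definition in_J I (A : set T) : Prop := exists x, chain_rep (fun _ => 0) I A x.

(* v continuous: for every I in Sigma, mu_{v,I} is sigma-additive on J *)
Definition continuous_sf v : Prop :=
  forall I, in_Sigma I ->
  forall (A : nat -> set T) (x : nat -> R) (y : R),
    (forall k, in_J I (A k)) ->
    trivIset setT A ->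
    in_J I (\bigcup_k A k) ->
    (forall k, chain_rep v I (A k) (x k)) ->
    chain_rep v I (\bigcup_k A k) y ->
    (\sum_(k < n) x k) @[n --> \oo] --> y.

Definition choquet v (f : T -> R) (l : R) : Prop :=
  ((y * v setT)%:E
     + \int[lebesgue_measure]_(z in `[y, +oo[) (v [set w | z < f w])%:E)%E
    @[y --> -oo] --> l%:E.

Definition vnull v (N : set T) : Prop :=
  measurable N /\
  forall A, measurable A -> v (N `|` A) = v A /\ v (~` N `&` A) = v A.

End Choquet.

(* Main.v *)
Require Import Defs.
From mathcomp Require Import all_boot all_order all_algebra ssrAC.
From mathcomp Require Import all_classical all_reals all_analysis lra.
Import Order.TTheory GRing.Theory Num.Theory.
Import numFieldNormedType.Exports.
Local Open Scope classical_set_scope.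
Local Open Scope ring_scope.

Section S.
Context (d : measure_display) (T : measurableType d) (R : realType).

Lemma chain_rep1 (u : set T -> R) I C D : I C -> I D -> D `<=` C ->
  chain_rep u I (C `\` D) (u C - u D).
Proof.
move=> IC ID DC.
exists 1%N, (fun _ => C), (fun _ => D); split => //.
- apply/seteqP; split => [w Hw|w [i _ Hw]] //; by exists 0%N.
- by rewrite big_ord1.
Qed.

Lemma E_mono (E : nat -> set T) : (forall k, E k `<=` E k.+1) ->
  forall k m, (k <= m)%N -> E k `<=` E m.
Proof.
move=> hE k m /subnK <-; elim: (m - k)%N => [|j IH] //=.
by rewrite addSn; apply: subset_trans IH (hE _).
Qed.

Lemma E_step (E : nat -> set T) : E 0%N = set0 ->
  forall m w, E m w -> exists k, (k < m)%N /\ E k.+1 w /\ ~ E k w.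
Proof.
move=> E0; elim=> [|m IH] w; first by rewrite E0.
move=> Hw; case: (pselect (E m w)) => H.
  by have [k [km Hk]] := IH _ H; exists k; split => //; exact: ltnW.
by exists m.
Qed.

Lemma cont_below0 (v : set T -> R) (E : nat -> set T) :
  (exists I : set (set T), in_Sigma I) -> continuous_sf v ->
  (forall k, measurable (E k)) -> (forall k, E k `<=` E k.+1) -> E 0%N = set0 ->
  v (E n) @[n --> \oo] --> v (\bigcup_n E n).
Proof.
move=> [I0 [I0m I0ch I00 I0T I0gen]] vc mE hE E0.
set B := \bigcup_n E n.
pose I : set (set T) := [set X | (exists k C, I0 C /\ X = E k `|` (C `&` E k.+1)) \/
                   (exists C, I0 C /\ X = B `|` (C `&` ~` B))].
have mB : measurable B by exact: bigcupT_measurable.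
have IE k : I (E k).
  by left; exists k, set0; split => //; rewrite set0I setU0.
have IB : I B by right; exists set0; split => //; rewrite set0I setU0.
have EB k : E k `<=` B by move=> w Hw; exists k.
have sub1 k C : E k `|` (C `&` E k.+1) `<=` E k.+1.
  by move=> w [Hw|[_ Hw]] //; exact: hE.
have sub2 C : B `<=` B `|` (C `&` ~` B) by exact: subsetUl.
have sI : @in_Sigma d T I.
  split.
  - move=> X [[k [C [IC ->]]]|[C [IC ->]]]; apply: measurableU => //;
      apply: measurableI => //; [exact: I0m | exact: I0m | exact: measurableC].
  - move=> X Y [[k [C [IC ->]]]|[C [IC ->]]] [[m [C' [IC' ->]]]|[C' [IC' ->]]].
    + case: (ltngtP k m) => [km|mk|<-].
      * left; apply: subset_trans (sub1 k C) _.
        apply: (subset_trans (E_mono _ hE _ _ km)); exact: subsetUl.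
      * right; apply: subset_trans (sub1 m C') _.
        apply: (subset_trans (E_mono _ hE _ _ mk)); exact: subsetUl.
      * by case: (I0ch _ _ IC IC') => CC; [left|right]; apply: setUS; apply: setSI.
    + left; apply: subset_trans (sub1 k C) _; apply: subset_trans (EB _) _.
      exact: sub2.
    + right; apply: subset_trans (sub1 m C') _; apply: subset_trans (EB _) _.
      exact: sub2.
    + by case: (I0ch _ _ IC IC') => CC; [left|right]; apply: setUS; apply: setSI.
  - by rewrite -E0.
  - by right; exists setT; split => //; rewrite setTI setUv.
  - apply/seteqP; split.
      apply: smallest_sub; first exact: sigma_algebra_measurable.
      move=> X [[k [C [IC ->]]]|[C [IC ->]]]; apply: measurableU => //;
        apply: measurableI => //; [exact: I0m | exact: I0m | exact: measurableC].
    rewrite -I0gen.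
    set G := <<s I >>.
    have [G0 GC GU] := smallest_sigma_algebra setT I.
    have GI : forall X Y, G X -> G Y -> G (X `&` Y) :=
      @measurableI _ (g_sigma_algebraType I).
    have GD : forall X Y, G X -> G Y -> G (X `\` Y) :=
      @measurableD _ (g_sigma_algebraType I).
    have GU2 : forall X Y, G X -> G Y -> G (X `|` Y) :=
      @measurableU _ (g_sigma_algebraType I).
    have GI' X : I X -> G X by move=> IX; exact: sub_gen_smallest.
    pose H := [set X | (forall k, G (X `&` (E k.+1 `\` E k))) /\ G (X `&` ~` B)].
    have HX : forall X, H X -> G X.
      move=> X [H1 H2].
      have -> : X = (\bigcup_k (X `&` (E k.+1 `\` E k))) `|` (X `&` ~` B).
        apply/seteqP; split => [w Xw|w [[k _ [Xw _]]|[Xw _]]] //.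
        case: (pselect (B w)) => [[m _ Hm]|nB]; last by right.
        have [k [_ Hk]] := E_step _ E0 _ _ Hm.
        by left; exists k.
      by apply: (GU2) => //; apply: (GU).
    suff hsub : <<s I0 >> `<=` H by move=> X mX; exact: HX (hsub X mX).
    apply: smallest_sub.
    + split.
      * by split => [k|]; rewrite set0I; exact: G0.
      * move=> X [HX1 HX2]; split => [k|].
          have -> : (setT `\` X) `&` (E k.+1 `\` E k) =
                  (E k.+1 `\` E k) `\` (X `&` (E k.+1 `\` E k)).
            apply/seteqP; split => w /=; first by move=> [[_ nX] Pw]; split => // -[].
            by move=> [Pw nXP]; split => //; split => // Xw; apply: nXP.
          by apply: (GD) => //; apply: (GD); exact: (GI').
        have -> : (setT `\` X) `&` ~` B = ~` B `\` (X `&` ~` B).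
          apply/seteqP; split => w /=; first by move=> [[_ nX] Pw]; split => // -[].
          by move=> [Pw nXP]; split => //; split => // Xw; apply: nXP.
        apply: (GD) => //; rewrite -setTD; apply: (GD); [exact: (@measurableT _ (g_sigma_algebraType I))|exact: (GI')].
      * move=> F HF; split => [k|]; rewrite setI_bigcupl; apply: (GU) => n.
          exact: (HF n).1.
        exact: (HF n).2.
    + move=> C IC; split => [k|].
        have -> : C `&` (E k.+1 `\` E k) = (E k `|` (C `&` E k.+1)) `\` E k.
          apply/seteqP; split => w /=; first by move=> [Cw [E1 nE]]; split => //; right.
          by move=> [[//|[Cw Ew]] nEw].
        by apply: (GD); apply: (GI'); [left; exists k, C|].
      have -> : C `&` ~` B = (B `|` (C `&` ~` B)) `\` B.
        apply/seteqP; split => w /=; first by move=> [Cw nB]; split => //; right.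
        by move=> [[//|[Cw Ew]] nEw].
      by apply: (GD); apply: (GI'); [right; exists C|].
pose A k := E k.+1 `\` E k.
have UA : \bigcup_k A k = B `\` set0.
  rewrite setD0; apply/seteqP; split => [w [k _ [Hw _]]|w [m _ Hm]].
    by exists k.+1.
  by have [k [_ Hk]] := E_step _ E0 _ _ Hm; exists k.
have I0' : I set0 by rewrite -E0.
have := vc I sI A (fun k => v (E k.+1) - v (E k)) (v B - v set0).
have Hsum n : \sum_(k < n) (v (E k.+1) - v (E k)) = v (E n) - v (E 0%N).
  by rewrite -(big_mkord xpredT (fun k => v (E k.+1) - v (E k))) telescope_sumr.
move=> /(_ _ _ _ _ _) H.
have {}H : v (E n) - v (E 0%N) @[n --> \oo] --> v B - v set0.
  rewrite (eq_fun Hsum) in H; apply: H.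
  - by move=> k; eexists; exact: (chain_rep1 (fun _ : set T => (0:R)) _ _ _ (IE _) (IE _) (hE k)).
  - move=> i j _ _ [w [[Hi1 Hi2] [Hj1 Hj2]]].
    case: (ltngtP i j) => // ij.
      by exfalso; apply: Hj2; exact: (E_mono _ hE _ _ ij).
    by exfalso; apply: Hi2; exact: (E_mono _ hE _ _ ij).
  - by rewrite UA; eexists; exact: (chain_rep1 (fun _ : set T => (0:R)) _ _ _ IB I0' (@sub0set _ _)).
  - by move=> k; exact: (chain_rep1 v _ _ _ (IE _) (IE _) (hE k)).
  - by rewrite UA; exact: (chain_rep1 v _ _ _ IB I0' (@sub0set _ _)).
rewrite E0 in H.
have -> : (fun n => v (E n)) = (fun n => (v (E n) - v set0) + v set0).
  by apply/funext => n; rewrite subrK.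
rewrite -[v B](subrK (v set0)); exact: cvgD H (cvg_cst _).
Qed.

Lemma cont_below (v : set T -> R) (F : nat -> set T) :
  (exists I : set (set T), in_Sigma I) -> continuous_sf v ->
  (forall k, measurable (F k)) -> (forall k, F k `<=` F k.+1) ->
  v (F n) @[n --> \oo] --> v (\bigcup_n F n).
Proof.
move=> sI vc mF hF.
pose E n := if n is k.+1 then F k else set0.
have := @cont_below0 v E sI vc _ _ erefl.
have -> : \bigcup_n E n = \bigcup_n F n.
  apply/seteqP; split => [w [[|k] _ //= Hw]|w [k _ Hw]]; first by exists k.
  by exists k.+1.
move=> H.
have {}H := H (fun k => if k is k'.+1 then mF k' else measurable0).
have {}H := H (fun k => if k is k'.+1 then hF k' else sub0set _).
by rewrite -cvg_shiftS in H.
Qed.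

Lemma ac4 (a a' Ia Ib Ja Jb : \bar R) : (Ia <= Ib)%E ->
  ((a + Jb) + (a' + (Ia + Ja)) <= (a' + (Ib + Jb)) + (a + Ja))%E.
Proof.
move=> h.
rewrite (AC (2*(1*2)) ((1*2*(3*5))*4)) /=.
rewrite [X in (_ <= X)%E](AC ((1*2)*2) ((4*3*(1*5))*2)) /=.
by apply: leeD.
Qed.

Definition GG (phi : R -> R) (c : R) (y : R) : \bar R :=
  ((y * c)%:E + \int[lebesgue_measure]_(z in `[y, +oo[) (phi z)%:E)%E.

Lemma split_int (phi : R -> R) y' y : (y' <= y) ->
  (forall z, 0 <= phi z) -> measurable_fun setT phi ->
  (\int[lebesgue_measure]_(z in `[y', +oo[) (phi z)%:E =
   \int[lebesgue_measure]_(z in `[y', y[) (phi z)%:E +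
   \int[lebesgue_measure]_(z in `[y, +oo[) (phi z)%:E)%E.
Proof.
move=> yy p0 mp.
have -> : `[y', +oo[%classic = `[y', y[%classic `|` `[y, +oo[%classic :> set R.
  apply/seteqP; split => z /=; rewrite !in_itv /= ?andbT.
    by move=> hz; case: (ltP z y) => zy; [left; apply/andP|right].
  by move=> [/andP [] //|]; apply: le_trans.
apply: ge0_integral_setU => //.
- apply/measurable_realfun.measurable_EFinP; exact: measurable_funS mp.
- by move=> z _; rewrite lee_fin.
- rewrite disj_set2E; apply/eqP/seteqP; split => z //=.
  by rewrite !in_itv /= andbT => -[/andP [_ zy] yz]; move: (lt_le_trans zy yz); rewrite ltxx.
Qed.

Lemma L1 (pa pb : R -> R) c y' y : (y' <= y) ->
  (forall z, 0 <= pa z) -> (forall z, pa z <= pb z) ->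
  measurable_fun setT pa -> measurable_fun setT pb ->
  (GG pb c y + GG pa c y' <= GG pb c y' + GG pa c y)%E.
Proof.
move=> yy pa0 pab ma mb.
have pb0 z : 0 <= pb z by apply: le_trans (pab z).
rewrite /GG (@split_int pa y' y yy pa0 ma) (@split_int pb y' y yy pb0 mb).
set Ia := (\int[lebesgue_measure]_(z in `[y', y[) (pa z)%:E)%E.
set Ib := (\int[lebesgue_measure]_(z in `[y', y[) (pb z)%:E)%E.
set Ja := (\int[lebesgue_measure]_(z in `[y, +oo[) (pa z)%:E)%E.
set Jb := (\int[lebesgue_measure]_(z in `[y, +oo[) (pb z)%:E)%E.
have IaIb : (Ia <= Ib)%E.
  apply: ge0_le_integral => //.
  - by move=> z _; rewrite lee_fin.
  - apply/measurable_realfun.measurable_EFinP; exact: measurable_funS ma.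
  - apply/measurable_realfun.measurable_EFinP; exact: measurable_funS mb.
  - by move=> z _; rewrite lee_fin.
exact: ac4.
Qed.

Lemma pick2 {U : Type} {F : set_system U} {FF : ProperFilter F} (P Q : set U) :
  F P -> F Q -> exists x, P x /\ Q x.
Proof.
move=> FP FQ.
exact: (@filter_ex U F FF _ (@filterS2 U F _ P Q (fun x => P x /\ Q x) (fun x a b => conj a b) FP FQ)).
Qed.

Lemma pick2' {U : Type} {F : set_system U} {FF : Filter F} (P Q : set U) :
  F P -> F Q -> F (fun x => P x /\ Q x).
Proof.
move=> FP FQ.
exact: (@filterS2 U F _ P Q (fun x => P x /\ Q x) (fun x a b => conj a b) FP FQ).
Qed.

Lemma GG_fin (phi : R -> R) c l : (forall z, 0 <= phi z) -> measurable_fun setT phi ->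
  GG phi c y @[y --> -oo] --> l%:E -> forall y, GG phi c y \is a fin_num.
Proof.
move=> p0 mp /fine_cvgP [Hfin _] y.
have [y' [Fy' yy']] := pick2 _ _ Hfin (nbhs_ninfty_le (num_real y)).
have Hy' : (\int[lebesgue_measure]_(z in `[y', +oo[) (phi z)%:E)%E \is a fin_num.
  by move: Fy'; rewrite /GG fin_numD => /andP [].
have J0 : (0 <= \int[lebesgue_measure]_(z in `[y, +oo[) (phi z)%:E)%E.
  by apply: integral_ge0 => z _; rewrite lee_fin.
have Hsub : (\int[lebesgue_measure]_(z in `[y, +oo[) (phi z)%:E <=
    \int[lebesgue_measure]_(z in `[y', +oo[) (phi z)%:E)%E.
  apply: ge0_subset_integral => //.
  - apply/measurable_realfun.measurable_EFinP; exact: measurable_funS mp.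
  - by move=> z _; rewrite lee_fin.
  - by move=> z /=; rewrite !in_itv /= !andbT; apply: le_trans.
rewrite /GG fin_numD; apply/andP; split; first by [].
rewrite ge0_fin_numE //; apply: (le_lt_trans Hsub); rewrite -ge0_fin_numE //.
exact: le_trans J0 Hsub.
Qed.

Lemma lim_le (ga gb : R -> R) la lb : ga y @[y --> -oo] --> la ->
  gb y @[y --> -oo] --> lb -> (forall y, ga y <= gb y) -> la <= lb.
Proof.
move=> ha hb hab.
rewrite -(cvg_lim (@Rhausdorff R) ha) -(cvg_lim (@Rhausdorff R) hb).
apply: ler_lim; [exact: cvgP ha|exact: cvgP hb|exact: nearW].
Qed.

Section vlemmas.
Variables (v : set T -> R).
Hypothesis vnd : nondecreasing_sf v.
Hypothesis v0 : v set0 = 0.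

Lemma mset (h : T -> R) z : measurable_fun setT h -> measurable [set w | z < h w].
Proof.
move=> mh.
have -> : [set w | z < h w] = h @^-1` `]z, +oo[.
  by apply/seteqP; split => w /=; rewrite in_itv /= andbT.
rewrite -(setTI (_ @^-1` _)); exact: mh.
Qed.

Lemma phi_ge0 (h : T -> R) z : measurable_fun setT h -> 0 <= v [set w | z < h w].
Proof. by move=> mh; rewrite -v0; apply: vnd; [exact: measurable0|exact: mset|exact: sub0set]. Qed.

Lemma phi_m (h : T -> R) : measurable_fun setT h ->
  measurable_fun setT (fun z : R => v [set w | z < h w]).
Proof.
move=> mh; apply: measurable_realfun.nonincreasing_measurable => // x y xy.
apply: vnd; [exact: mset|exact: mset|].
by move=> w /=; apply: le_lt_trans.
Qed.

End vlemmas.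

Lemma Gle (pa pb : R -> R) c y : (forall z, 0 <= pa z) -> (forall z, pa z <= pb z) ->
  measurable_fun setT pa -> measurable_fun setT pb -> (GG pa c y <= GG pb c y)%E.
Proof.
move=> pa0 pab ma mb; rewrite /GG; apply: leeD => //.
apply: ge0_le_integral => //.
- by move=> z _; rewrite lee_fin.
- apply/measurable_realfun.measurable_EFinP; exact: measurable_funS ma.
- apply/measurable_realfun.measurable_EFinP; exact: measurable_funS mb.
- by move=> z _; rewrite lee_fin.
Qed.

End S.

Arguments GG {R}.
Arguments GG_fin {R}.
Arguments L1 {R}.
Arguments Gle {R}.
Arguments lim_le {R}.
Arguments cont_below {d T R}.
Arguments phi_ge0 {d T R}.
Arguments phi_m {d T R}.
Arguments mset {d T R}.

Theorem theorem9 (d : measure_display) (T : measurableType d) (R : realType)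
    (v : set T -> R) (fn : nat -> T -> R) (f : T -> R)
    (ln : nat -> R) (l : R) :
  (exists I : set (set T), in_Sigma I) ->
  nondecreasing_sf v -> continuous_sf v -> v set0 = 0 ->
  (forall n, measurable_fun setT (fn n)) -> measurable_fun setT f ->
  (forall n, choquet v (fn n) (ln n)) -> choquet v f l ->
  (forall n w, fn n w <= fn n.+1 w) ->
  (exists N, vnull v N /\ forall w, ~ N w -> fn n w @[n --> \oo] --> f w) ->
  ln n @[n --> \oo] --> l.
Proof.
move=> sI vnd vc v0 mfn mf Hfn Hf hmono [N [[mN vN] Hlim]].
set c := v setT.
pose p n (z : R) := v [set w | z < fn n w].
pose q (z : R) := v [set w | z < f w].
have p0 n z : 0 <= p n z by exact: phi_ge0.
have q0 z : 0 <= q z by exact: phi_ge0.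
have pm n : measurable_fun setT (p n) by exact: phi_m.
have qm : measurable_fun setT q by exact: phi_m.
have HG n : GG (p n) c y @[y --> -oo] --> (ln n)%:E := Hfn n.
have HGq : GG q c y @[y --> -oo] --> l%:E := Hf.
have Gfin n y := @GG_fin R (p n) c (ln n) (p0 n) (pm n) (HG n) y.
have Gqfin y := @GG_fin R q c l q0 qm HGq y.
pose g n y := fine (GG (p n) c y).
pose gq y := fine (GG q c y).
have gcv n : g n y @[y --> -oo] --> ln n.
  by have := HG n; move/fine_cvgP => [_ H].
have gqcv : gq y @[y --> -oo] --> l.
  by have := HGq; move/fine_cvgP => [_ H].
have EG n y : GG (p n) c y = (g n y)%:E by rewrite fineK.
have EGq y : GG q c y = (gq y)%:E by rewrite fineK.
have fnmono w : {homo (fun n => fn n w) : n m / (n <= m)%N >-> n <= m}.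
  exact: (nondecreasing_seqP (fun n => fn n w)).1 (fun n => hmono n w).
have pmono n m : (n <= m)%N -> forall z, p n z <= p m z.
  move=> nm z; apply: vnd; [exact: mset|exact: mset|].
  by move=> w /= zw; apply: (lt_le_trans zw); exact: fnmono.
have pcv z : p n z @[n --> \oo] --> q z.
  pose F n := ~` N `&` [set w | z < fn n w].
  have H := @cont_below d T R v F sI vc.
  have {}H := H (fun n => measurableI _ _ (measurableC mN) (mset _ _ (mfn n))).
  have {}H := H (fun n w (h : F n w) => conj h.1 (lt_le_trans h.2 (hmono n w))).
  have UF : \bigcup_n F n = ~` N `&` [set w | z < f w].
    apply/seteqP; split => [w [n _ [nN zw]]|w [nN zw]].
      split => //=; apply: (lt_le_trans zw).
      have := nondecreasing_cvgn_le (fnmono w) (cvgP _ (Hlim w nN)) n.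
      by rewrite (cvg_lim (@Rhausdorff R) (Hlim w nN)).
    have [n Hn] := filter_ex (cvgr_gt _ (Hlim w nN) _ zw).
    by exists n => //.
  rewrite UF in H.
  rewrite /q -(vN _ (mset _ _ mf)).2.
  have -> : (fun n => p n z) = (fun n => v (F n)).
    by apply/funext => n; rewrite /F (vN _ (mset _ _ (mfn n))).2.
  exact: H.
have pq n z : p n z <= q z.
  have := nondecreasing_cvgn_le (fun a b ab => pmono a b ab z) (cvgP _ (pcv z)) n.
  by rewrite (cvg_lim (@Rhausdorff R) (pcv z)).
have F1 n y' y : y' <= y -> g n y + g 0%N y' <= g n y' + g 0%N y.
  move=> yy; rewrite -lee_fin !EFinD -!EG.
  exact: (L1 (p 0%N) (p n) c y' y yy (p0 0%N) (pmono 0%N n (leq0n n)) (pm 0%N) (pm n)).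
have F2 y : g n y @[n --> \oo] --> gq y.
  have H1 : (\int[lebesgue_measure]_(z in `[y, +oo[) (p n z)%:E)%E @[n --> \oo] -->
            (\int[lebesgue_measure]_(z in `[y, +oo[) (q z)%:E)%E.
    have := @cvg_monotone_convergence _ _ R lebesgue_measure `[y, +oo[%classic
      (measurable_itv _) (fun n z => (p n z)%:E).
    move=> /(_ _ _ _) H; apply: cvg_trans; [apply: H|].
    - move=> n; apply/measurable_realfun.measurable_EFinP; exact: measurable_funS (pm n).
    - by move=> n z _; rewrite lee_fin.
    - by move=> z _ a b ab; rewrite lee_fin; exact: pmono.
    have -> : (\int[lebesgue_measure]_(x in `[y, +oo[) limn (fun n => (p n x)%:E))%E =
              (\int[lebesgue_measure]_(z in `[y, +oo[) (q z)%:E)%E.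
      apply: eq_integral => z _; apply: (cvg_lim (@ereal_hausdorff R)).
      by apply/fine_cvgP; split; [exact: nearW|exact: pcv].
    exact: cvg_refl.
  have H2 : GG (p n) c y @[n --> \oo] --> GG q c y.
    apply: cvgeD; [exact: fin_num_adde_defr|exact: cvg_cst|exact: H1].
  rewrite EGq in H2.
  by move/fine_cvgP : H2 => [_ H2].
have lmono n m : (n <= m)%N -> ln n <= ln m.
  move=> nm; apply: (lim_le _ _ _ _ (gcv n) (gcv m)) => y.
  by rewrite -lee_fin -!EG; apply: Gle => //; exact: pmono.
have lle n : ln n <= l.
  apply: (lim_le _ _ _ _ (gcv n) gqcv) => y.
  by rewrite -lee_fin -EG -EGq; apply: Gle.
have key e : 0 < e -> exists n0, l <= ln n0 + 5 * e.
  move=> e0.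
  move: (gcv 0%N) => /cvgrPdist_le /(_ e e0) A1.
  move: gqcv => /cvgrPdist_le /(_ e e0) A2.
  have [y [Hy1 Hy2]] := pick2 _ _ A1 A2.
  move: (F2 y) => /cvgrPdist_le /(_ e e0) B.
  have [n0 Hn0] := filter_ex B.
  move: (gcv n0) => /cvgrPdist_le /(_ e e0) C1.
  have C3 := nbhs_ninfty_le (num_real y).
  have [y' [[Hc1 Hc2] Hc3]] := pick2 _ _ (pick2' _ _ C1 A1) C3.
  have := F1 n0 y' y Hc3.
  move: Hy1 Hy2 Hn0 Hc1 Hc2; rewrite /= !ler_distl => /andP [? ?] /andP [? ?] /andP [? ?] /andP [? ?] /andP [? ?] ?.
  exists n0; lra.
apply/cvgrPdist_le => e e0.
have e5 : 0 < e / 5 by lra.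
have [n0 Hn0] := key (e / 5) e5.
near=> n.
have nn0 : (n0 <= n)%N by near: n; exists n0.
have := lmono _ _ nn0; have := lle n.
rewrite ger0_norm ?subr_ge0 //; lra.
Unshelve. all: by end_near.
Qed.
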